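(* Let $\Lambda=k(\Gamma,\mathcal{A})$ be a generalized path algebra without relations. Let $i\in\Gamma_0$, $1\le j\le s_i$, and let $((M_l)_{l\in\Gamma_0},(\phi_\alpha)_{\alpha\in\Gamma_1})$ be the representation of the indecomposable injective $I(i,j)=D(\Lambda\overline{e_{ij}})$. Then: - $M_i=I_i^j=D(A_ie_{ij})$; - for $l\ne i$, $M_l\cong(D A_l)^{n_l}$ as $A_l$-modules, where $$n_l=\sum_{\gamma:\,l=i_0\to i_1\to\cdots\to i_r=i}(\dim_kA_{i_1})\cdots(\dim_kA_{i_{r-1}})(\dim_kI_i^j),$$ summed over all paths $\gamma$ from $l$ to $i$ in $\Gamma$. In particular $M_l=0$ if there is no path from $l$ to $i$.
   Context: $k$ is an algebraically closed field, $\Gamma$ a finite acyclic quiver, and $\mathcal{A}=\{A_i:i\in\Gamma_0\}$ finite-dimensional basic $k$-algebras. The generalized path algebra $k(\Gamma,\mathcal{A})$ is spanned by $\mathcal{A}$-paths $a_1\beta_1\cdots a_n\beta_na_{n+1}$ ($\beta_1\cdots\beta_n$ a path of $\Gamma$, $a_i\in A_{s(\beta_i)}$, $a_{n+1}\in A_{e(\beta_n)}$), modulo multilinearity, with concatenation product (multiplying adjacent algebra entries, or $0$ if paths don't compose). For each $i$, $\{e_{i1},\dots,e_{is_i}\}$ is a complete set of primitive pairwise orthogonal idempotents of $A_i$, and $\overline{e_{ij}}$ is the class of $e_{ij}$ in $\Lambda$. $D=\operatorname{Hom}_k(-,k)$. The representation of a right $\Lambda$-module $X$ has $X_l=X\cdot1_l$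 ($1_l$ the identity of $A_l$) and $\phi_\alpha(x)=x\alpha$. *)

(* Defs.v *)
From HB Require Import structures.
From mathcomp Require Import all_boot all_order all_algebra all_field.
Set Implicit Arguments. Unset Strict Implicit. Unset Printing Implicit Defensive.
Import GRing.Theory.

Fixpoint path_ok (V E : eqType) (src tgt : E -> V) (v : V) (s : seq E) : bool :=
  match s with
  | [::] => true
  | b :: s' => (src b == v) && path_ok src tgt (tgt b) s'
  end.

Definition path_end (V E : Type) (tgt : E -> V) (v : V) (s : seq E) : V :=
  last v (map tgt s).

Definition acyclic (V E : eqType) (src tgt : E -> V) : Prop :=
  forall (v : V) (s : seq E),
    path_ok src tgt v s -> path_end tgt v s = v -> s = [::].

(* Isomorphism of (right) modules over a set of scalars A, given by
   k-vector spaces M, N with actions of A: a k-linear bijection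
   commuting with the actions. *)
Definition rmod_iso (k : fieldType) (A : Type) (M N : vectType k)
    (actM : M -> A -> M) (actN : N -> A -> N) : Prop :=
  exists f : 'Hom(M, N),
    bijective f /\ forall (m : M) (a : A), f (actM m a) = actN (f m) a.

Local Open Scope ring_scope.

Definition eA (k : fieldType) (A : falgType k) (e : A) : {vspace A} :=
  limg (amull e).
Definition eA_act (k : fieldType) (A : falgType k) (e : A)
    (m : subvs_of (eA e)) (a : A) : subvs_of (eA e) :=
  vsproj (eA e) (vsval m * a).

Definition Ae (k : fieldType) (A : falgType k) (e : A) : {vspace A} :=
  limg (amulr e).

Definition DAe (k : fieldType) (A : falgType k) (e : A) : vectType k :=
  'Hom(subvs_of (Ae e), k^o).
Definition DAe_act (k : fieldType) (A : falgType k) (e : A)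
    (g : DAe e) (a : A) : DAe e :=
  linfun (fun y : subvs_of (Ae e) => g (vsproj (Ae e) (a * vsval y))).

Definition DA (k : fieldType) (A : falgType k) : vectType k := 'Hom(A, k^o).
Definition DA_act (k : fieldType) (A : falgType k) (g : DA A) (a : A) : DA A :=
  linfun (fun y : A => g (a * y)).

Definition DAn (k : fieldType) (A : falgType k) (n : nat) : vectType k :=
  {ffun 'I_n -> DA A}.
Definition DAn_act (k : fieldType) (A : falgType k) (n : nat)
    (g : DAn A n) (a : A) : DAn A n :=
  [ffun t => DA_act (g t) a].

Definition primitive_idem (k : fieldType) (A : falgType k) (x : A) : Prop :=
  [/\ x * x = x, x != 0 &
      forall y z : A, y * y = y -> z * z = z -> y * z = 0 -> z * y = 0 ->
        x = y + z -> y = 0 \/ z = 0].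

Definition complete_prim_idems (k : fieldType) (A : falgType k) (s : nat)
    (e : 'I_s -> A) : Prop :=
  [/\ forall j, primitive_idem (e j),
      forall j j', j != j' -> e j * e j' = 0 &
      \sum_(j < s) e j = 1].

Definition basic_wrt (k : fieldType) (A : falgType k) (s : nat)
    (e : 'I_s -> A) : Prop :=
  forall j j' : 'I_s, j != j' -> ~ rmod_iso (@eA_act k A (e j)) (@eA_act k A (e j')).

(* The A-paths  iota(x_0) beta_1 iota(x_1) ... beta_r iota(x_r)  along the
   arrows s starting at v, with each x_m running through the chosen basis
   (vbasis) of the algebra at the m-th vertex of the path. *)
Fixpoint apaths (k : fieldType) (V E : finType) (tgt : E -> V)
    (A : V -> falgType k) (L : falgType k) (iota : forall v, A v -> L)
    (arr : E -> L) (v : V) (s : seq E) : seq L :=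
  match s with
  | [::] => [seq iota v x | x <- vbasis (fullv : {vspace A v})]
  | b :: s' => [seq iota v x * arr b * y
               | x <- vbasis (fullv : {vspace A v}),
                 y <- apaths tgt iota arr (tgt b) s']
  end.

(* all A-paths (over all paths of the quiver; in an acyclic quiver every
   path has length < #|V|) *)
Definition all_apaths (k : fieldType) (V E : finType) (src tgt : E -> V)
    (A : V -> falgType k) (L : falgType k) (iota : forall v, A v -> L)
    (arr : E -> L) : seq L :=
  \big[cat/[::]]_(v : V) \big[cat/[::]]_(n < #|V|)
     \big[cat/[::]]_(t : n.-tuple E | path_ok src tgt v t)
        apaths tgt iota arr v t.

(* (L, iota, arr) is the generalized path algebra k(Gamma, A) (without
   relations): iota v : A_v -> L is the inclusion a |-> (trivial A-path a),
   arr b is the arrow b, the classes 1_v = iota v 1 are orthogonal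
   idempotents summing to 1, arrows go from 1_{src} to 1_{tgt}, and the
   A-paths with entries running through bases form a basis of L
   (i.e. L = (+)_{paths} A_{i_0} (x) ... (x) A_{i_r}, with concatenation
   product). *)
Definition gen_path_algebra (k : fieldType) (V E : finType) (src tgt : E -> V)
    (A : V -> falgType k) (L : falgType k) (iota : forall v, A v -> L)
    (arr : E -> L) : Prop :=
  [/\ (forall v (c : k) (x y : A v), iota v (c *: x + y) = c *: iota v x + iota v y)
      /\ (forall v (x y : A v), iota v (x * y) = iota v x * iota v y),
      forall v w, v != w -> iota v 1 * iota w 1 = 0,
      \sum_(v : V) iota v 1 = 1,
      forall b, iota (src b) 1 * arr b = arr b /\ arr b * iota (tgt b) 1 = arr b &
      basis_of fullv (all_apaths src tgt iota arr)].

Definition Xinj (k : fieldType) (L : falgType k) (eb : L) : vectType k :=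
  DAe eb.
Definition Xinj_act (k : fieldType) (L : falgType k) (eb : L)
    (f : Xinj eb) (lam : L) : Xinj eb := DAe_act f lam.

(* M_l = X . 1_l, with 1_l = iota l 1 *)
Definition rep_space (k : fieldType) (L : falgType k) (eb one_l : L)
    : {vspace Xinj eb} :=
  limg (linfun (fun f : Xinj eb => Xinj_act f one_l)).

Definition rep_act (k : fieldType) (V : finType) (A : V -> falgType k)
    (L : falgType k) (iota : forall v, A v -> L) (eb : L) (l : V)
    (m : subvs_of (rep_space eb (iota l 1))) (a : A l)
    : subvs_of (rep_space eb (iota l 1)) :=
  vsproj (rep_space eb (iota l 1)) (Xinj_act (vsval m) (iota l a)).

(* n_l = sum over paths l = i_0 -> ... -> i_r = i of
   dim A_{i_1} ... dim A_{i_{r-1}} * dI   (paths of length < #|V|, which in an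
   acyclic quiver are all paths) *)
Definition mult_nl (k : fieldType) (V E : finType) (src tgt : E -> V)
    (A : V -> falgType k) (l i : V) (dI : nat) : nat :=
  (\sum_(n < #|V|) \sum_(t : n.-tuple E | path_ok src tgt l t && (path_end tgt l t == i))
     (\prod_(b <- take n.-1 t) \dim (fullv : {vspace A (tgt b)})) * dI)%N.

(* Main.v *)
Require Import Defs.
From HB Require Import structures.
From mathcomp Require Import all_boot all_order all_algebra all_field zify.
Import GRing.Theory.
Local Open Scope ring_scope.
Lemma linE (k : fieldType) (U W : vectType k) (f : U -> W) :
  linear f -> forall x, linfun f x = f x.
Proof.
move=> hf x.
pose fL : {linear U -> W} := HB.pack f (GRing.isLinear.Build k U W *:%R f hf).
exact: (lfunE fL x).
Qed.



Lemma free_flatten_filter (k : fieldType) (W : vectType k) (I : eqType)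
  (F : I -> seq W) (r : seq I) (P : pred I) :
  free (flatten (map F r)) -> free (flatten (map F (filter P r))).
Proof.
have hp : perm_eq (filter P r ++ filter (predC P) r) r.
  by rewrite (perm_filterC P r) perm_refl.
rewrite -(perm_free (perm_flatten (perm_map F hp))).
by rewrite map_cat flatten_cat => /catl_free.
Qed.

Lemma free_block (k : fieldType) (W : vectType k) (I : eqType)
  (F : I -> seq W) (r : seq I) (x : I) :
  x \in r -> free (flatten (map F r)) -> free (F x).
Proof.
move=> xr; rewrite (perm_free (perm_flatten (perm_map F (perm_to_rem xr)))).
by move/catl_free.
Qed.

Lemma amulrE (k : fieldType) (B : falgType k) (u v : B) : amulr u v = v * u.
Proof. by rewrite lfunE. Qed.

Lemma inj_of_free_basis (k : fieldType) (U W : vectType k) (f : U -> W) (X : seq U) :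
  linear f -> basis_of fullv X -> free (map f X) -> injective f.
Proof.
move=> hf hX hfX.
pose F := linfun f.
have FE x : F x = f x by rewrite linE.
suff /lker0P hinj : lker F == 0%VS by move=> x y; rewrite -!FE => /hinj.
have h := limg_ker_dim F fullv; rewrite capfv in h.
have e1 : (F @: fullv)%VS = <<map f X>>%VS.
  by rewrite -(span_basis hX) limg_span (eq_map FE).
rewrite e1 (eqnP hfX) size_map -(eqnP (basis_free hX)) (span_basis hX) in h.
by rewrite -dimv_eq0; apply/eqP; move: h; lia.
Qed.

Lemma mem_bigcat_seq (I T : eqType) (r : seq I) (P : pred I) (F : I -> seq T) x y :
  x \in r -> P x -> y \in F x -> y \in \big[cat/[::]]_(i <- r | P i) F i.
Proof.
elim: r => [//|a r IH]; rewrite inE big_cons => /orP [/eqP <- -> hy|hr hP hy].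
  by rewrite mem_cat hy.
by case: (P a); rewrite ?mem_cat IH ?orbT.
Qed.

Lemma mem_bigcat (I : finType) (T : eqType) (P : pred I) (F : I -> seq T) x y :
  P x -> y \in F x -> y \in \big[cat/[::]]_(i | P i) F i.
Proof. by apply: mem_bigcat_seq; rewrite mem_index_enum. Qed.
Lemma Ae_mull (k : fieldType) (B : falgType k) (eb a z : B) : z \in Ae eb -> a * z \in Ae eb.
Proof.
case/memv_imgP => x _ ->; rewrite amulrE mulrA -amulrE.
exact: memv_img (memvf _).
Qed.

Lemma Ae_mem (k : fieldType) (B : falgType k) (eb x : B) : x * eb \in Ae eb.
Proof. by rewrite -amulrE; exact: memv_img (memvf _). Qed.

Lemma rmod_iso_trans (k : fieldType) (B : Type) (M1 M2 M3 : vectType k)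
  (act1 : M1 -> B -> M1) (act2 : M2 -> B -> M2) (act3 : M3 -> B -> M3) :
  rmod_iso act1 act2 -> rmod_iso act2 act3 -> rmod_iso act1 act3.
Proof.
move=> [f [bf hf]] [g [bg hg]]; exists (g \o f)%VF; split.
  by apply: (eq_bij (bij_comp bg bf)) => x; rewrite comp_lfunE.
by move=> m a; rewrite !comp_lfunE hf hg.
Qed.

Lemma DN_DAn (k : fieldType) (B : falgType k) (n : nat) :
  rmod_iso (fun (h : 'Hom({ffun 'I_n -> B}, k^o)) (a : B) =>
              linfun (fun y : {ffun 'I_n -> B} => h [ffun t => a * y t]))
           (@DAn_act k B n).
Proof.
pose dl (t : 'I_n) (x : B) : {ffun 'I_n -> B} := [ffun t' => if t' == t then x else 0].
have dlin t : linear (dl t).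
  by move=> c x y; apply/ffunP => t'; rewrite !ffunE; case: eqP => _; rewrite ?scaler0 ?addr0.
have hlin (h : 'Hom({ffun 'I_n -> B}, k^o)) t : linear (fun x => h (dl t x)).
  by move=> c x y; rewrite dlin linearP.
pose G0 (h : 'Hom({ffun 'I_n -> B}, k^o)) : DAn B n :=
  [ffun t => linfun (fun x : B => h (dl t x))].
have G0E h t x : G0 h t x = h (dl t x) by rewrite ffunE linE.
have Glin : linear G0.
  move=> c h1 h2; apply/ffunP => t; apply/lfunP => x.
  by rewrite /G0 !ffunE add_lfunE scale_lfunE !(@linE _ _ _ _ (hlin _ t)) add_lfunE scale_lfunE.
pose G := linfun G0.
have GE h t x : G h t x = h (dl t x) by rewrite linE // G0E.
have Hlin (g : DAn B n) : linear (fun y : {ffun 'I_n -> B} => \sum_t g t (y t)).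
  move=> c y1 y2; rewrite scaler_sumr -big_split; apply: eq_bigr => t0 _.
  by rewrite !ffunE linearP.
exists G; split.
  exists (fun g : DAn B n => linfun (fun y : {ffun 'I_n -> B} => \sum_t g t (y t))).
    move=> h; apply/lfunP => y; rewrite linE //.
    under eq_bigr => t _ do rewrite GE.
    rewrite -linear_sum; congr (h _); apply/ffunP => t'.
    rewrite sum_ffunE (bigD1 t') //= ffunE eqxx big1 ?addr0 // => t ht.
    by rewrite ffunE eq_sym (negbTE ht).
  move=> g; apply/ffunP => t; apply/lfunP => x; rewrite GE linE //.
  rewrite (bigD1 t) //= ffunE eqxx big1 ?addr0 // => t' ht.
  by rewrite ffunE (negbTE ht) linear0.
move=> h a; apply/ffunP => t; apply/lfunP => x.
rewrite GE linE; last by move=> c y1 y2; rewrite -linearP; congr (h _); apply/ffunP => t'; rewrite !ffunE mulrDr scalerAr.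
rewrite /DAn_act ffunE /DA_act linE; last by move=> c y1 y2; rewrite mulrDr -scalerAr linearP.
rewrite GE; congr (h _); apply/ffunP => t'; rewrite !ffunE.
by case: eqP => _; rewrite ?mulr0.
Qed.
Section Main.
Variables (k : fieldType) (V E : finType) (src tgt : E -> V).
Variables (A : V -> falgType k) (L : falgType k) (iota : forall v, A v -> L) (arr : E -> L).
Hypothesis HL : gen_path_algebra src tgt iota arr.

Lemma iota_lin v : linear (iota v).
Proof. by case: HL => [[h _] _ _ _ _] a x y; rewrite h. Qed.

HB.instance Definition _ v := GRing.isLinear.Build k (A v) L *:%R (iota v) (iota_lin v).

Lemma iotaM v x y : iota v (x * y) = iota v x * iota v y.
Proof. by case: HL => [[_ h] _ _ _ _]. Qed.

Lemma iota_l v x : iota v 1 * iota v x = iota v x.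
Proof. by rewrite -iotaM mul1r. Qed.
Lemma iota_r v x : iota v x * iota v 1 = iota v x.
Proof. by rewrite -iotaM mulr1. Qed.
Lemma orth v w : v != w -> iota v 1 * iota w 1 = 0.
Proof. by case: HL => [_ h _ _ _]; apply: h. Qed.
Lemma iota_lw l v x : l != v -> iota l 1 * iota v x = 0.
Proof. by move=> h; rewrite -(iota_l v x) mulrA orth ?mul0r. Qed.
Lemma iota_rw w i z y : w != i -> iota w z * iota i y = 0.
Proof.
move=> h; rewrite -(iota_r w z) -(iota_l i y) mulrA -(mulrA (iota w z)) orth //.
by rewrite mulr0 mul0r.
Qed.

Definition dA v := \dim (fullv : {vspace A v}).

Fixpoint Qs (s : seq E) : seq L :=
  match s with
  | [::] => [:: 1]
  | b :: s' => if s' is _ :: _ then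
       [seq arr b * iota (tgt b) x * q | x <- vbasis (fullv : {vspace A (tgt b)}), q <- Qs s']
     else [:: arr b]
  end.

Lemma apaths_shape v s b : b \in apaths tgt iota arr v s -> s != [::] ->
  exists (x : A v) (z : A (path_end tgt v s)) q,
    [/\ x \in vbasis fullv, z \in vbasis fullv, q \in Qs s &
        b = iota v x * q * iota (path_end tgt v s) z].
Proof.
elim: s v b => [//|e0 s IH] v b /=.
case/allpairsP => [[x y] /= [hx hy ->]] _.
case: s IH hy => [|e1 s] IH hy.
  case/mapP: hy => z hz ->.
  by exists x, z, (arr e0); split => //; rewrite mem_seq1.
have [x' [z [q' [hx' hz hq' ->]]]] := IH _ _ hy isT.
exists x, z, (arr e0 * iota (tgt e0) x' * q'); split => //.
  by apply: (allpairs_f (fun x q => arr e0 * iota (tgt e0) x * q)).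
by rewrite !mulrA.
Qed.

Lemma size_apaths v s : s != [::] ->
  size (apaths tgt iota arr v s) = (dA v * size (Qs s) * dA (path_end tgt v s))%N.
Proof.
elim: s v => [//|e0 s IH] v _ /=.
rewrite size_allpairs size_tuple.
case: s IH => [|e1 s] IH.
  rewrite size_map size_tuple /= muln1. done.
rewrite IH // size_allpairs size_tuple /dA /path_end /=.
by rewrite !mulnA.
Qed.

Lemma size_Qs s : size (Qs s) = (\prod_(b <- take (size s).-1 s) dA (tgt b))%N.
Proof.
elim: s => [|e0 s IH] /=; first by rewrite big_nil.
case: s IH => [|e1 s] IH /=; first by rewrite big_nil.
by rewrite size_allpairs size_tuple IH big_cons.
Qed.
Definition rr : seq (V * seq E) :=
  \big[@cat (V * seq E)/[::]]_(v : V) \big[@cat (V * seq E)/[::]]_(n < #|V|)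
     \big[@cat (V * seq E)/[::]]_(t : n.-tuple E | path_ok src tgt v t) [:: (v, val t)].
Definition FF (x : V * seq E) := apaths tgt iota arr x.1 x.2.

Lemma all_apathsE : all_apaths src tgt iota arr = flatten (map FF rr).
Proof.
have fm : {morph (fun s => flatten (map FF s)) : x y / x ++ y >-> x ++ y}.
  by move=> x y; rewrite map_cat flatten_cat.
rewrite /rr (big_morph _ fm (erefl (flatten (map FF [::])))).
apply: eq_bigr => v _; rewrite (big_morph _ fm (erefl (flatten (map FF [::])))).
apply: eq_bigr => n _; rewrite (big_morph _ fm (erefl (flatten (map FF [::])))).
by apply: eq_bigr => t _ /=; rewrite cats0.
Qed.

Lemma rr_ok x : x \in rr -> path_ok src tgt x.1 x.2.
Proof.
pose P := (fun s : seq (V * seq E) => all (fun x => path_ok src tgt x.1 x.2) s).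
suff : P rr by move/allP; apply.
rewrite /rr; apply: (big_ind P) => //; first by move=> ? ?; rewrite /P all_cat => -> ->.
move=> v _; apply: (big_ind P) => //; first by move=> ? ?; rewrite /P all_cat => -> ->.
move=> n _; apply: (big_ind P) => //; first by move=> ? ?; rewrite /P all_cat => -> ->.
by move=> t ht; rewrite /P /= ht.
Qed.

Lemma B_basis : basis_of fullv (flatten (map FF rr)).
Proof. by rewrite -all_apathsE; case: HL. Qed.

Lemma apaths_head v s b : b \in apaths tgt iota arr v s ->
  exists (x : A v) c, b = iota v x * c.
Proof.
case: s => [|e0 s] /=.
  by case/mapP => x _ ->; exists x, 1; rewrite mulr1.
by case/allpairsP => [[x y] /= [_ _ ->]]; exists x, (arr e0 * y); rewrite mulrA.
Qed.

Lemma apaths_tail v s b : b \in apaths tgt iota arr v s ->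
  exists (z : A (path_end tgt v s)) c, b = c * iota (path_end tgt v s) z.
Proof.
case: s => [|e0 s] hb.
  by case/mapP: hb => x _ ->; exists x, 1; rewrite mul1r.
by have [x [z [q [_ _ _ ->]]]] := apaths_shape _ _ _ hb isT; exists z, (iota v x * q).
Qed.

Lemma lmul_lin (a c : L) : linear (fun x : L => a * x * c).
Proof. by move=> t x y; rewrite mulrDr mulrDl -scalerAr -scalerAl. Qed.

Lemma span_gen (l : V) (eb : L) (W : {vspace L}) :
  (forall v s b, (v, s) \in rr -> b \in apaths tgt iota arr v s -> v = l ->
     iota l 1 * b * eb \in W) ->
  forall x : L, iota l 1 * x * eb \in W.
Proof.
move=> hW x.
have hx : x \in (linfun (fun x : L => iota l 1 * x * eb) @^-1: W)%VS.
  case/andP: B_basis => /eqP hspan _.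
  have hx0 : x \in span (flatten (map FF rr)) by rewrite hspan memvf.
  move: hx0; apply/subvP.
  apply/span_subvP => b /flatten_mapP [[v s] hvs hb].
  rewrite -memv_preim linE; last exact: lmul_lin.
  have [vl|vl] := eqVneq v l; first by subst v; exact: hW _ _ _ hvs hb erefl.
  have [y [c ->]] := apaths_head _ _ _ hb.
  by rewrite mulrA iota_lw 1?eq_sym // !mul0r mem0v.
by rewrite -memv_preim linE in hx; last exact: lmul_lin.
Qed.
Lemma XactE (eb : L) (g : Xinj eb) (lam : L) y :
  Xinj_act g lam y = g (vsproj (Ae eb) (lam * vsval y)).
Proof.
rewrite /Xinj_act /DAe_act linE // => t x y'.
by rewrite linearP /= mulrDr -scalerAr linearP /= linearP.
Qed.

Lemma Xact_lin (eb lam : L) : linear (fun f : Xinj eb => Xinj_act f lam).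
Proof.
move=> t f g; apply/lfunP => y.
by rewrite add_lfunE scale_lfunE !XactE add_lfunE scale_lfunE.
Qed.

Lemma XactM (eb : L) (g : Xinj eb) (a b : L) :
  Xinj_act (Xinj_act g a) b = Xinj_act g (a * b).
Proof.
apply/lfunP => y; rewrite !XactE vsprojK ?mulrA //.
exact/Ae_mull/subvsP.
Qed.

Lemma rep_spaceP (eb lam : L) (f : Xinj eb) :
  reflect (exists g, f = Xinj_act g lam) (f \in rep_space eb lam).
Proof.
apply: (iffP idP).
  by case/memv_imgP => g _ ->; exists g; rewrite linE //; apply: Xact_lin.
case=> g ->; rewrite /rep_space -[Xinj_act g lam](@linE _ _ _ _ (Xact_lin eb lam)).
exact: memv_img (memvf _).
Qed.

Lemma bij_hom (U W : vectType k) (f : 'Hom(U, W)) :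
  lker f == 0%VS -> limg f == fullv -> bijective f.
Proof.
move=> h1 h2; exists (f^-1)%VF; first exact: lker0_lfunK.
by move=> x; apply: limg_lfunVK; rewrite (eqP h2) memvf.
Qed.

Lemma core (l : V) (eb : L) (N : vectType k) (actN : A l -> N -> N)
  (hact : forall a, linear (actN a)) (phi : 'Hom(N, L)) :
  lker phi == 0%VS ->
  (forall a y, phi (actN a y) = iota l a * phi y) ->
  (forall y, phi y \in Ae eb) ->
  (forall y, iota l 1 * phi y = phi y) ->
  (forall x : L, iota l 1 * x * eb \in limg phi) ->
  rmod_iso (@rep_act k V A L iota eb l)
    (fun (h : 'Hom(N, k^o)) a => linfun (fun y => h (actN a y))).
Proof.
move=> hker hequi hAe hone hspan.
pose M := subvs_of (rep_space eb (iota l 1)).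
pose P := (linfun (vsproj (Ae eb)) \o phi)%VF.
have PE y : P y = vsproj (Ae eb) (phi y) by rewrite comp_lfunE lfunE.
have Flin : linear (fun m : M => (vsval m \o P)%VF).
  move=> t m1 m2; apply/lfunP => y.
  by rewrite add_lfunE scale_lfunE !comp_lfunE linearP /= add_lfunE scale_lfunE.
pose F : 'Hom(M, 'Hom(N, k^o)) := linfun (fun m : M => (vsval m \o P)%VF).
have FE m y : F m y = vsval m (vsproj (Ae eb) (phi y)).
  by rewrite linE // comp_lfunE PE.
have Fmem (m : M) : exists g, vsval m = Xinj_act g (iota l 1).
  by apply/rep_spaceP; exact: subvsP.
have FE2 (m : M) g y : vsval m = Xinj_act g (iota l 1) ->
    F m y = g (vsproj (Ae eb) (phi y)).
  by move=> hm; rewrite FE hm XactE vsprojK // hone.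
exists F; split.
  apply: bij_hom.
    apply/eqP/vspaceP => m; rewrite memv_ker memv0.
    apply/idP/idP => [/eqP Fm0|/eqP ->]; last by rewrite linear0.
    rewrite -(vsvalK m); apply/eqP.
    suff -> : vsval m = 0 by rewrite linear0.
    have [g hg] := Fmem m.
    apply/lfunP => z; rewrite zero_lfunE hg XactE.
    have /memv_imgP [x _ hz] := subvsP z.
    rewrite amulrE in hz; rewrite hz mulrA.
    have /memv_imgP [y _ ->] := hspan x.
    by rewrite -(FE2 m g y hg) Fm0 zero_lfunE.
  rewrite eqEsubv subvf /=; apply/subvP => h _.
  pose psi := (phi^-1)%VF.
  pose g : Xinj eb := (h \o psi \o linfun vsval)%VF.
  have gE z : g z = h (psi (vsval z)) by rewrite !comp_lfunE lfunE.
  pose f := Xinj_act g (iota l 1).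
  have fm : f \in rep_space eb (iota l 1) by apply/rep_spaceP; exists g.
  have -> : h = F (vsproj _ f).
    apply/lfunP => y; rewrite (FE2 _ g) ?vsprojK // gE vsprojK //.
    by rewrite /psi lker0_lfunK.
  exact: memv_img (memvf _).
move=> m a; apply/lfunP => y.
have [g hg] := Fmem m.
have hm : Xinj_act (vsval m) (iota l a) \in rep_space eb (iota l 1).
  apply/rep_spaceP; exists (Xinj_act g (iota l a)).
  by rewrite hg !XactM iota_l -iotaM mulr1.
rewrite FE /rep_act vsprojK // XactE vsprojK // -hequi.
rewrite (@linE _ _ _ (fun y0 : N => F m (actN a y0))); first by rewrite FE.
by move=> t x1 x2; rewrite hact linearP.
Qed.
Definition PhiF (l i : V) (Q : seq L) (d : nat) (Z : seq (A i))
  (y : {ffun 'I_(size Q) * 'I_d -> A l}) : L :=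
  \sum_(p < size Q) \sum_(c < d) iota l (y (p, c)) * Q`_p * iota i (Z`_c).

Lemma PhiF_lin l i Q d Z : linear (PhiF l i Q d Z).
Proof.
move=> t y1 y2; rewrite /PhiF scaler_sumr -big_split; apply: eq_bigr => p _.
rewrite scaler_sumr -big_split; apply: eq_bigr => c _.
by rewrite !ffunE linearP /= mulrDl mulrDl -!scalerAl.
Qed.

Lemma PhiF_delta l i Q d Z p c x :
  PhiF l i Q d Z [ffun pc => if pc == (p, c) then x else 0] =
  iota l x * Q`_p * iota i Z`_c.
Proof.
rewrite /PhiF pair_bigA /= (bigD1 (p, c)) //= ffunE eqxx big1 ?addr0 //.
by move=> [p' c'] /= hne; rewrite ffunE (negbTE hne) linear0 !mul0r.
Qed.

Lemma transfer l i Q (Z : seq (A i)) : free Z ->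
  (forall y, PhiF l i Q (\dim (fullv : {vspace A i})) (vbasis fullv) y = 0 -> y = 0) ->
  forall y, PhiF l i Q (size Z) Z y = 0 -> y = 0.
Proof.
move=> hZ hinj y hy.
set zb := vbasis (fullv : {vspace A i}).
pose y2 := [ffun pc : 'I_(size Q) * 'I_(\dim (fullv : {vspace A i})) =>
   \sum_(c < size Z) coord zb pc.2 (Z`_c) *: y (pc.1, c)].
have e2 : PhiF l i Q _ zb y2 = PhiF l i Q (size Z) Z y.
  rewrite /PhiF; apply: eq_bigr => p _.
  under eq_bigr => c' _ do rewrite ffunE /= linear_sum !mulr_suml.
  rewrite exchange_big /=; apply: eq_bigr => c _.
  rewrite [RHS](_ : _ = \sum_(c' < \dim (fullv : {vspace A i}))
      iota l (y (p, c)) * Q`_p * iota i (coord zb c' Z`_c *: zb`_c')); last first.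
    by rewrite -mulr_sumr -linear_sum -(coord_vbasis (memvf _)).
  apply: eq_bigr => c' _.
  by rewrite !linearZ /= -!scalerAl -scalerAr.
have y20 := hinj _ (etrans e2 hy).
apply/ffunP => -[p c]; rewrite ffunE.
have hpc c' : \sum_(c < size Z) coord zb c' Z`_c *: y (p, c) = 0.
  by have := y20; move/ffunP/(_ (p, c')); rewrite !ffunE.
rewrite [y (p, c)](coord_vbasis (memvf _)) big1 // => a _.
set xb := vbasis (fullv : {vspace A l}).
suff -> : coord xb a (y (p, c)) = 0 by rewrite scale0r.
have hZt : free (in_tuple Z) by []. move/vector.freeP: hZt => hZ'.
apply: (hZ' (fun c => coord xb a (y (p, c)))) => /=.
under eq_bigr => c' _ do rewrite [Z`_c'](coord_vbasis (memvf _)) scaler_sumr.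
rewrite exchange_big /= big1 // => c' _.
under eq_bigr => c1 _ do rewrite scalerA.
rewrite -scaler_suml.
suff -> : \sum_(i0 < size Z) coord xb a (y (p, i0)) * coord zb c' Z`_i0 =
    coord xb a (\sum_(c < size Z) coord zb c' Z`_c *: y (p, c)).
  by rewrite hpc linear0 scale0r.
rewrite linear_sum; apply: eq_bigr => c1 _.
by rewrite linearZ /= mulrC.
Qed.

Lemma stepD l i Q (S : seq L) : free S ->
  size S = (dA l * size Q * dA i)%N ->
  (forall b, b \in S -> exists (x : A l) q (z : A i),
       [/\ q \in Q, z \in vbasis fullv & b = iota l x * q * iota i z]) ->
  forall y, PhiF l i Q (\dim (fullv : {vspace A i})) (vbasis fullv) y = 0 -> y = 0.
Proof.
move=> hS hsz hmem.
pose PH := linfun (PhiF l i Q (\dim (fullv : {vspace A i})) (vbasis fullv)).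
have PHE y : PH y = PhiF l i Q _ (vbasis fullv) y by rewrite linE //; apply: PhiF_lin.
have sub : (<<S>> <= limg PH)%VS.
  apply/span_subvP => b /hmem [x [q [z [hq hz ->]]]].
  have hp : (index q Q < size Q)%N by rewrite index_mem.
  pose p := Ordinal hp.
  have hz' : (index z (vbasis fullv) < \dim (fullv : {vspace A i}))%N.
    by rewrite -{2}(size_tuple (vbasis (fullv : {vspace A i}))) index_mem.
  pose c := Ordinal hz'.
  have -> : iota l x * q * iota i z = PH [ffun pc => if pc == (p, c) then x else 0].
    by rewrite PHE PhiF_delta /= !nth_index.
  exact: memv_img (memvf _).
have h1 := limg_ker_dim PH fullv; rewrite capfv in h1.
have hdom : \dim (fullv : {vspace {ffun 'I_(size Q) * 'I_(\dim (fullv : {vspace A i})) -> A l}})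
    = (size Q * \dim (fullv : {vspace A i}) * dim (A l))%N.
  rewrite dimvf.
  have -> : dim {ffun 'I_(size Q) * 'I_(\dim (fullv : {vspace A i})) -> A l} =
     (#|{: 'I_(size Q) * 'I_(\dim (fullv : {vspace A i}))}| * dim (A l))%N by [].
  by rewrite card_prod !card_ord.
have h2 := dimvS sub; rewrite (eqnP hS) hsz /dA dimvf in h2.
rewrite hdom in h1.
have hk : \dim (lker PH) = 0%N.
  move: h1 h2; rewrite [in X in _ = X](mulnC _ (dim (A l))) mulnA.
  move: (\dim (lker PH)) (\dim (limg PH)) (dim (A l) * size Q * _)%N => a b c; lia.
move=> y hy; apply/eqP; rewrite -memv0.
move/eqP: hk; rewrite dimv_eq0 => /eqP <-.
by rewrite memv_ker PHE hy.
Qed.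
Lemma mem_rr v n (t : n.-tuple E) : (n < #|V|)%N -> path_ok src tgt v t ->
  (v, val t) \in rr.
Proof.
move=> hn hp; rewrite /rr.
apply: (mem_bigcat _ _ _ _ v) => //.
apply: (mem_bigcat _ _ _ _ (Ordinal hn)) => //.
by apply: (mem_bigcat _ _ _ _ t) => //=; rewrite mem_seq1.
Qed.

Lemma iota_inj v : injective (iota v).
Proof.
apply: (inj_of_free_basis _ _ _ _ (vbasis fullv) (iota_lin v) (vbasisP _)).
have hv : (v, [::]) \in rr.
  have hn : (0 < #|V|)%N by apply/card_gt0P; exists v.
  exact: (mem_rr v 0 [tuple] hn).
case/andP: B_basis => _ hf.
exact: (free_block _ _ _ FF _ _ hv hf).
Qed.

Lemma tail_zero v s b i (e : A i) : b \in apaths tgt iota arr v s ->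
  path_end tgt v s != i -> b * iota i e = 0.
Proof.
move=> hb hne; have [z [c ->]] := apaths_tail _ _ _ hb.
by rewrite -mulrA iota_rw // mulr0.
Qed.

Lemma part1 (Hacyc : acyclic src tgt) i (e : A i) :
  rmod_iso (@rep_act k V A L iota (iota i e) i) (@DAe_act k (A i) e).
Proof.
pose N := subvs_of (Ae e).
pose actN (a : A i) (y : N) : N := vsproj (Ae e) (a * vsval y).
have hact a : linear (actN a).
  by move=> t x y; rewrite /actN linearP /= mulrDr -scalerAr linearP.
pose phi : 'Hom(N, L) := (linfun (iota i) \o linfun vsval)%VF.
have phiE y : phi y = iota i (vsval y) by rewrite comp_lfunE !lfunE.
apply: (core i (iota i e) N actN hact phi).
- apply/lker0P => y1 y2; rewrite !phiE => /iota_inj; exact: (can_inj vsvalK).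
- move=> a y; rewrite !phiE /actN vsprojK ?iotaM //.
  exact/Ae_mull/subvsP.
- move=> y; rewrite phiE.
  have /memv_imgP [x _ ->] := subvsP y.
  by rewrite amulrE iotaM; apply: Ae_mem.
- by move=> y; rewrite phiE iota_l.
apply: span_gen => v s b hvs hb vi; subst v.
have [he|hne] := eqVneq (path_end tgt i s) i; last first.
  by rewrite -mulrA (tail_zero _ _ _ _ _ hb hne) mulr0 mem0v.
have s0 : s = [::] := Hacyc _ _ (rr_ok _ hvs) he; subst s.
case/mapP: hb => x _ ->.
rewrite iota_l -iotaM.
have hxe : x * e \in Ae e by apply: Ae_mem.
by rewrite -(vsprojK hxe) -phiE; apply: memv_img (memvf _).
Qed.

Lemma part3 i (e : A i) l :
  ~ (exists t : seq E, path_ok src tgt l t && (path_end tgt l t == i)) ->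
  rep_space (iota i e) (iota l 1) = 0%VS.
Proof.
move=> hno.
have h0 x : iota l 1 * x * iota i e \in (0%VS : {vspace L}).
  apply: span_gen => v s b hvs hb vl; subst v.
  have [he|hne] := eqVneq (path_end tgt l s) i.
    by case: hno; exists s; rewrite (rr_ok _ hvs) he eqxx.
  by rewrite -mulrA (tail_zero _ _ _ _ _ hb hne) mulr0 mem0v.
apply/eqP; rewrite -subv0; apply/subvP => f /rep_spaceP [g ->].
rewrite memv0; apply/eqP/lfunP => z; rewrite XactE zero_lfunE.
have /memv_imgP [x _ hz] := subvsP z.
rewrite hz amulrE mulrA.
by move: (h0 x); rewrite memv0 => /eqP ->; rewrite !linear0.
Qed.
Lemma apaths_shape' v s b w : path_end tgt v s = w ->
  b \in apaths tgt iota arr v s -> s != [::] ->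
  exists (x : A v) (z : A w) q,
    [/\ x \in vbasis fullv, z \in vbasis fullv, q \in Qs s &
        b = iota v x * q * iota w z].
Proof. by move=> <-; apply: apaths_shape. Qed.

Definition cnt (l i : V) (s : seq (V * seq E)) : nat :=
  \sum_(x <- s | (x.1 == l) && (path_end tgt x.1 x.2 == i)) size (Qs x.2).

Lemma count_rr l i :
  cnt l i rr = (\sum_(n0 < #|V|) \sum_(t : n0.-tuple E |
     path_ok src tgt l t && (path_end tgt l t == i))
       \prod_(b <- take n0.-1 t) dA (tgt b))%N.
Proof.
have hmor (I : Type) (r : seq I) (P : pred I) (F : I -> seq (V * seq E)) :
    cnt l i (\big[cat/[::]]_(x <- r | P x) F x) = (\sum_(x <- r | P x) cnt l i (F x))%N.
  elim: r => [|a r IH]; first by rewrite !big_nil /cnt big_nil.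
  by rewrite !big_cons; case: (P a); rewrite // -IH /cnt big_cat.
rewrite /rr hmor (bigD1 l) // -[RHS]addn0; apply: (f_equal2 addn); last first.
  apply: big1 => v /= hv; rewrite hmor big1 // => n0 _.
  rewrite hmor big1 // => t _.
  by rewrite /cnt big_cons big_nil /= (negbTE hv).
rewrite hmor; apply: eq_bigr => n0 _; rewrite hmor big_mkcondr.
apply: eq_bigr => t _; rewrite /cnt big_cons big_nil /= eqxx /=.
by case: ifP => _; rewrite ?addn0 // size_Qs size_tuple.
Qed.

Lemma part2 l i (e : A i) : l != i ->
  rmod_iso (@rep_act k V A L iota (iota i e) l)
    (@DAn_act k (A l) (mult_nl src tgt A l i (\dim (fullv : {vspace DAe e})))).
Proof.
move=> hli.
set n := mult_nl src tgt A l i _.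
pose Pl := fun x : V * seq E => (x.1 == l) && (path_end tgt x.1 x.2 == i).
pose Qall := flatten (map (fun x : V * seq E => Qs x.2) (filter Pl rr)).
pose S := flatten (map FF (filter Pl rr)).
have memPl x : x \in filter Pl rr ->
    [/\ x.1 = l, path_end tgt x.1 x.2 = i, x.2 != [::] & x \in rr].
  rewrite mem_filter => /andP [/andP [/eqP h1 /eqP h2] h3]; split => //.
  apply/eqP => h0; move: h2; rewrite h0 /path_end /= h1 => hli'.
  by rewrite hli' eqxx in hli.
have hS : free S.
  by apply: free_flatten_filter; case/andP: B_basis.
have hsizeS : size S = (dA l * size Qall * dA i)%N.
  rewrite /S /Qall !size_flatten /shape -!map_comp !sumnE !big_map.
  rewrite big_distrr big_distrl /=.
  apply: eq_big_seq => x hx; have [h1 h2 h3 _] := memPl x hx.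
  by rewrite /FF size_apaths // h2 h1.
have hmem b : b \in S -> exists (x : A l) q (z : A i),
    [/\ q \in Qall, z \in vbasis fullv & b = iota l x * q * iota i z].
  case/flatten_mapP => x hx hb; have [h1 h2 h3 _] := memPl x hx.
  case: x hx hb h1 h2 h3 => v s /= hx hb h1 h2 h3; subst v.
  have [x [z [q [_ hz hq ->]]]] := apaths_shape' _ _ _ _ h2 hb h3.
  exists x, q, z; split => //.
  by apply/flatten_mapP; exists (l, s).
have inj0 := stepD l i Qall S hS hsizeS hmem.
set wb := vbasis (Ae e).
have inj1 := transfer l i Qall wb (basis_free (vbasisP _)) inj0.
set d := size (wb : seq (A i)).
have hdI : \dim (fullv : {vspace DAe e}) = d.
  rewrite dimvf /d size_tuple; change ((\dim (Ae e) * 1)%N = \dim (Ae e)); exact: muln1.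
have hm : size Qall = (\sum_(n0 < #|V|) \sum_(t : n0.-tuple E |
     path_ok src tgt l t && (path_end tgt l t == i))
       \prod_(b <- take n0.-1 t) dA (tgt b))%N.
  rewrite /Qall size_flatten /shape -map_comp sumnE big_map big_filter; exact: count_rr.
have hn : n = (size Qall * d)%N.
  rewrite /n /mult_nl hdI hm big_distrl; apply: eq_bigr => n0 _.
  by rewrite big_distrl.
have H : #|{: 'I_(size Qall) * 'I_d}| = n by rewrite card_prod !card_ord hn.
pose enc (pc : 'I_(size Qall) * 'I_d) : 'I_n := cast_ord H (enum_rank pc).
pose dec (t : 'I_n) := enum_val (cast_ord (esym H) t).
have encK : cancel enc dec by move=> pc; rewrite /dec /enc cast_ordK enum_rankK.
have decK : cancel dec enc by move=> t; rewrite /dec /enc enum_valK cast_ordKV.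
pose R (y : {ffun 'I_n -> A l}) : {ffun 'I_(size Qall) * 'I_d -> A l} :=
  [ffun pc => y (enc pc)].
pose phi0 y := PhiF l i Qall d wb (R y).
have phi_lin : linear phi0.
  move=> t y1 y2; rewrite /phi0 (_ : R (t *: y1 + y2) = t *: R y1 + R y2).
    exact: PhiF_lin.
  by apply/ffunP => pc; rewrite !ffunE.
pose phi := linfun phi0.
have phiE y : phi y = phi0 y by rewrite linE.
pose actN (a : A l) (y : {ffun 'I_n -> A l}) : {ffun 'I_n -> A l} := [ffun t => a * y t].
have hact a : linear (actN a).
  by move=> c y1 y2; apply/ffunP => t; rewrite !ffunE mulrDr scalerAr.
apply: (rmod_iso_trans _ _ _ _ _ _ _ _ _ (DN_DAn _ (A l) n)).
apply: (core l (iota i e) _ actN hact phi).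
- apply/eqP/vspaceP => y; rewrite memv_ker memv0 phiE.
  apply/eqP/eqP => [h|->]; last by rewrite -phiE linear0.
  have hR := inj1 _ h.
  apply/ffunP => t; rewrite ffunE -(decK t).
  by move/ffunP: hR => /(_ (dec t)); rewrite !ffunE.
- move=> a y; rewrite !phiE /phi0 /PhiF mulr_sumr; apply: eq_bigr => p _.
  rewrite mulr_sumr; apply: eq_bigr => c _.
  by rewrite !ffunE iotaM !mulrA.
- move=> y; rewrite phiE /phi0 /PhiF.
  apply: memv_suml => p _; apply: memv_suml => c _.
  have hc : wb`_c \in Ae e by apply: vbasis_mem; apply: mem_nth.
  case/memv_imgP: hc => x _ ->.
  by rewrite amulrE iotaM mulrA; apply: Ae_mem.
- move=> y; rewrite phiE /phi0 /PhiF mulr_sumr; apply: eq_bigr => p _.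
  rewrite mulr_sumr; apply: eq_bigr => c _.
  by rewrite !mulrA iota_l.
apply: span_gen => v s b hvs hb vl; subst v.
have [he|hne] := eqVneq (path_end tgt l s) i; last first.
  by rewrite -mulrA (tail_zero _ _ _ _ _ hb hne) mulr0 mem0v.
have hs : s != [::].
  by apply/eqP => h0; move: he; rewrite h0 /path_end /= => hli'; rewrite hli' eqxx in hli.
have [x [z [q [_ _ hq ->]]]] := apaths_shape' _ _ _ _ he hb hs.
rewrite !mulrA iota_l -(mulrA _ (iota i z)) -iotaM.
have hqa : q \in Qall.
  apply/flatten_mapP; exists (l, s) => //.
  by rewrite mem_filter /Pl /= eqxx he eqxx hvs.
have hp : (index q Qall < size Qall)%N by rewrite index_mem.
have hze : z * e \in Ae e by apply: Ae_mem.
rewrite (coord_vbasis hze) linear_sum mulr_sumr; apply: memv_suml => c _.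
rewrite linearZ /= -scalerAr; apply: memvZ.
have hc : (c < d)%N by rewrite /d size_tuple.
have -> : iota l x * q * iota i wb`_c =
    phi [ffun t => if t == enc (Ordinal hp, Ordinal hc) then x else 0].
  rewrite phiE /phi0.
  rewrite (_ : R _ = [ffun pc => if pc == (Ordinal hp, Ordinal hc) then x else 0]).
    by rewrite PhiF_delta /= nth_index.
  by apply/ffunP => pc; rewrite !ffunE (inj_eq (can_inj encK)).
exact: memv_img (memvf _).
Qed.
End Main.
Theorem proposition5p7
  (k : closedFieldType) (V E : finType) (src tgt : E -> V)
  (Hacyc : acyclic src tgt)
  (A : V -> falgType k) (s : V -> nat) (e : forall v, 'I_(s v) -> A v)
  (He : forall v, complete_prim_idems (e v))
  (Hbasic : forall v, basic_wrt (e v))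
  (L : falgType k) (iota : forall v, A v -> L) (arr : E -> L)
  (HL : gen_path_algebra src tgt iota arr)
  (i : V) (j : 'I_(s i)) :
  let eb := iota i (e i j) in
  rmod_iso (@rep_act k V A L iota eb i) (@DAe_act k (A i) (e i j))
  /\
  (forall l : V, l != i ->
     rmod_iso (@rep_act k V A L iota eb l)
       (@DAn_act k (A l)
          (mult_nl src tgt A l i (\dim (fullv : {vspace DAe (e i j)})))))
  /\
  (forall l : V,
     ~ (exists t : seq E, path_ok src tgt l t && (path_end tgt l t == i)) ->
     rep_space eb (iota l 1) = 0%VS).
Proof.
move=> eb; split.
  exact: (part1 _ _ _ _ _ _ _ _ _ HL Hacyc i (e i j)).
split.
  by move=> l hl; exact: (part2 _ _ _ _ _ _ _ _ _ HL l i (e i j) hl).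
by move=> l hno; exact: (part3 _ _ _ _ _ _ _ _ _ HL i (e i j) l hno).
Qed.
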